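(* Let ${\bf c}=(c_1,\ldots,c_{n+1})$ be a tuple of nonnegative integers, let $\Pi_{n+1}({\bf c})$ be the graph on $[n+2]$ consisting of the path $1\to2\to\cdots\to n+2$ together with $c_i$ additional edges $(i,n+2)$ for each $i=1,\ldots,n+1$, and let ${\bf a}=(a_1,\ldots,a_{n+1},-\sum_i a_i)$ with $a_i\in\mathbb{Z}_{\ge0}$. Then the Ehrhart polynomial $t\mapsto\#\big(t\,\mathcal{F}_{\Pi_{n+1}({\bf c})}({\bf a})\cap\mathbb{Z}^{E}\big)=K_{\Pi_{n+1}({\bf c})}(t{\bf a})$ has positive coefficients.
   Context: $\mathcal{F}_H({\bf a})$ is the set of $f\in\mathbb{R}_{\ge0}^{E(H)}$ with outflow minus inflow at each vertex $k$ (other than the last) equal to $a_k$; $K_H({\bf a})$ is the number of its integer points, and $E=E(\Pi_{n+1}({\bf c}))$. *)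

(* Defs.v *)
From mathcomp Require Import all_boot all_order all_algebra.
Set Implicit Arguments. Unset Strict Implicit. Unset Printing Implicit Defensive.
Import Order.TTheory GRing.Theory Num.Theory.

(* Graph Pi_{n+1}(c) on vertices 0..n+1 (0-indexed version of [n+2]).
   Edges: path edges  inl i : i -> i+1   for i : 'I_(n+1),
          extra edges inr (existT i j) : i -> n+1  for i : 'I_(n+1), j : 'I_(c i)
          (so c i parallel copies of the edge (i, last vertex)). *)
Definition extra_edge (n : nat) (c : 'I_(n.+1) -> nat) : finType :=
  {i : 'I_(n.+1) & 'I_(c i)}.
Definition Pi_edge (n : nat) (c : 'I_(n.+1) -> nat) : finType :=
  ('I_(n.+1) + extra_edge c)%type.

(* Integer (nonnegative) flows on Pi_{n+1}(c) with netflow a_k at every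
   vertex k other than the last one:  outflow(k) - inflow(k) = a k. *)
Definition is_int_flow (n : nat) (c : 'I_(n.+1) -> nat) (a : 'I_(n.+1) -> nat)
    (f : {ffun Pi_edge c -> nat}) : Prop :=
  forall k : 'I_(n.+1),
    f (inl k) + \sum_(e : extra_edge c | tag e == k) f (inr e)
    = \sum_(e : 'I_(n.+1) | e.+1 == k :> nat) f (inl e) + a k.

Definition has_card (T : eqType) (P : T -> Prop) (N : nat) : Prop :=
  exists s : seq T, [/\ uniq s, (forall x, x \in s <-> P x) & size s = N].

Definition K_Pi (n : nat) (c : 'I_(n.+1) -> nat) (a : 'I_(n.+1) -> nat) (N : nat) : Prop :=
  has_card (@is_int_flow n c a) N.

(* Main.v *)
Require Import Defs.
From mathcomp Require Import all_boot all_order all_algebra.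
From mathcomp Require Import zify.
Set Implicit Arguments. Unset Strict Implicit. Unset Printing Implicit Defensive.
Import Order.TTheory GRing.Theory Num.Theory.

Definition mc (x d : nat) : nat := 'C((x + d).-1, d).

Lemma mcx0 x : mc x 0 = 1. Proof. by rewrite /mc bin0. Qed.
Lemma mc0S d : mc 0 d.+1 = 0. Proof. by rewrite /mc add0n /= bin_small. Qed.
Lemma mc1 d : mc 1 d = 1. Proof. by rewrite /mc add1n /= binn. Qed.
Lemma mcS x d : mc x.+1 d.+1 = mc x.+1 d + mc x d.+1.
Proof. by rewrite /mc !addSn !addnS /= binS addnC. Qed.
Lemma mc_sym x d : mc x.+1 d = mc d.+1 x.
Proof.
rewrite /mc !addSn /= -(bin_sub (leq_addl d x)) addnK.
by rewrite [d + x]addnC.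
Qed.
Lemma mc_mul x d : d.+1 * mc x d.+1 = (x + d) * mc x d.
Proof. by rewrite /mc addnS /= mul_bin_diag. Qed.

Lemma MV p q m : \sum_(s < m.+1) mc p s * mc q (m - s) = mc (p + q) m.
Proof.
elim: q m => [|q IHq] m.
  rewrite big_ord_recr /= subnn mcx0 muln1 addn0 big1 ?add0n // => s _.
  have -> : m - s = (m - s.+1).+1 by rewrite subnSK.
  by rewrite mc0S muln0.
elim: m => [|m IHm]; first by rewrite big_ord_recr big_ord0 /= !mcx0.
rewrite big_ord_recr /= subnn mcx0.
have -> : \sum_(s < m.+1) mc p s * mc q.+1 (m.+1 - s)
   = \sum_(s < m.+1) mc p s * mc q.+1 (m - s) + \sum_(s < m.+1) mc p s * mc q (m.+1 - s).
  rewrite -big_split /=; apply: eq_bigr => s _.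
  by rewrite subSn ?mcS ?mulnDr // -ltnS.
rewrite IHm -addnA.
have -> : \sum_(s < m.+1) mc p s * mc q (m.+1 - s) + mc p m.+1 * 1
   = \sum_(s < m.+2) mc p s * mc q (m.+1 - s).
  by rewrite [in RHS]big_ord_recr /= subnn mcx0.
by rewrite IHq addnS mcS.
Qed.

Fixpoint comp_list (c s : nat) : seq (seq nat) :=
  if c is c'.+1 then [seq x :: r | x <- iota 0 s.+1, r <- comp_list c' (s - x)]
  else if s == 0 then [:: [::]] else [::].

Lemma mem_comp_list c s r :
  (r \in comp_list c s) = (size r == c) && (sumn r == s).
Proof.
elim: c s r => [|c IH] s r.
  by case: s => [|s]; case: r => [|x r].
rewrite -[comp_list c.+1 s]/([seq x :: r | x <- iota 0 s.+1, r <- comp_list c (s - x)]).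
apply/idP/idP.
  case/allpairsPdep => x [r' [hx hr' ->]] /=.
  move: hr'; rewrite IH => /andP[/eqP -> /eqP ->].
  rewrite eqxx /=; move: hx; rewrite mem_iota add0n ltnS => hx.
  by apply/eqP; lia.
case: r => [|x r]; first by case/andP. move=> /andP[hs /eqP hsum].
apply/flatten_mapP; exists x.
  by move: hsum => /= hsum; rewrite (@mem_iota 0 s.+1 x); lia.
apply/mapP; exists r => //.
by move: hs hsum => /= hs hsum; rewrite IH -(eqn_add2l 1) add1n hs -hsum addKn eqxx.
Qed.

Lemma uniq_comp_list c s : uniq (comp_list c s).
Proof.
elim: c s => [|c IH] s; first by case: s.
rewrite -[comp_list c.+1 s]/([seq x :: r | x <- iota 0 s.+1, r <- comp_list c (s - x)]).
apply: allpairs_uniq_dep => //; first exact: iota_uniq.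
by move=> [x1 r1] [x2 r2] _ _ /= [-> ->].
Qed.

Lemma size_comp_list c s : size (comp_list c s) = mc c s.
Proof.
elim: c s => [|c IH] s.
  by case: s => [|s]; rewrite /mc ?bin0 //=; rewrite bin_small.
rewrite -[comp_list c.+1 s]/([seq x :: r | x <- iota 0 s.+1, r <- comp_list c (s - x)]).
rewrite size_allpairs_dep -(MV 1 c s).
rewrite sumnE big_map -(big_mkord xpredT (fun x => mc 1 x * mc c (s - x))).
rewrite /index_iota subn0; apply: eq_bigr => x _.
by rewrite IH mc1 mul1n.
Qed.

Fixpoint flows_list (t : nat) (L : seq (nat * nat)) (b : nat) : seq (seq (seq nat)) :=
  if L is (c, a) :: L' then
    flatten [seq [seq x :: y | x <- comp_list c s, y <- flows_list t L' (b + t * a - s)]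
            | s <- iota 0 (b + t * a).+1]
  else [:: [::]].

Definition W t L b := size (flows_list t L b).

Lemma W_cons t c a L b :
  W t ((c, a) :: L) b = \sum_(s < (b + t * a).+1) mc c s * W t L (b + t * a - s).
Proof.
rewrite /W -[flows_list t ((c, a) :: L) b]/(flatten [seq [seq x :: y | x <- comp_list c s, y <- flows_list t L (b + t * a - s)]
            | s <- iota 0 (b + t * a).+1]).
rewrite size_flatten /shape -map_comp sumnE big_map.
rewrite -(big_mkord xpredT (fun s => mc c s * size (flows_list t L (b + t * a - s)))).
rewrite /index_iota subn0; apply: eq_bigr => s _ /=.
by rewrite size_allpairs size_comp_list.
Qed.

Lemma W_nil t b : W t [::] b = 1. Proof. by []. Qed.

Lemma mem_flows_cons t c a L b x y :
  (x :: y \in flows_list t ((c, a) :: L) b) =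
  [&& size x == c, sumn x <= b + t * a & y \in flows_list t L (b + t * a - sumn x)].
Proof.
apply/idP/idP.
  case/flatten_mapP => s; rewrite mem_iota add0n ltnS => /andP[_ hs].
  case/allpairsP => [[x' y']] /= [hx hy [-> ->]].
  move: hx; rewrite mem_comp_list => /andP[-> /eqP hsx].
  by rewrite hsx hs hy.
case/and3P => hx hs hy; apply/flatten_mapP; exists (sumn x).
  by rewrite mem_iota add0n ltnS.
by apply/allpairsP; exists (x, y); rewrite /= mem_comp_list hx eqxx.
Qed.

Lemma nil_flows_cons t c a L b : ([::] \in flows_list t ((c, a) :: L) b) = false.
Proof.
apply/negP; case/flatten_mapP => s _.
by case/allpairsP => [[x' y']] [_ _].
Qed.

Lemma uniq_flatten_key (T : eqType) (S : seq nat) (g : nat -> seq T) (h : T -> nat) :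
  uniq S -> (forall s, uniq (g s)) -> (forall s e, e \in g s -> h e = s) ->
  uniq (flatten [seq g s | s <- S]).
Proof.
move=> + ug hg; elim: S => [|s S IH] //= /andP[sS uS].
rewrite cat_uniq ug IH // andbT; apply/hasPn => e /flatten_mapP [s' s'S es'].
apply/negP => es; move: sS; rewrite -(hg _ _ es) (hg _ _ es').
by rewrite s'S.
Qed.

Lemma uniq_flows t L b : uniq (flows_list t L b).
Proof.
elim: L b => [|[c a] L IH] b //.
rewrite -[flows_list t ((c, a) :: L) b]/(flatten [seq [seq x :: y | x <- comp_list c s, y <- flows_list t L (b + t * a - s)]
            | s <- iota 0 (b + t * a).+1]).
apply: (@uniq_flatten_key _ _ _ (fun e => sumn (head [::] e))).
- exact: iota_uniq.
- move=> s; apply: allpairs_uniq => //; first exact: uniq_comp_list.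
  by move=> [x1 r1] [x2 r2] _ _ /= [-> ->].
- move=> s e /allpairsP [[x y]] /= [hx _ ->] /=.
  by move: hx; rewrite mem_comp_list => /andP[_ /eqP].
Qed.

Definition PS (y : seq (seq nat)) k := \sum_(i < k.+1) sumn (nth [::] y i).
Definition PA (L : seq (nat * nat)) k := \sum_(i < k.+1) (nth (0, 0) L i).2.

Lemma PS_cons0 x y : PS (x :: y) 0 = sumn x.
Proof. by rewrite /PS big_ord_recl big_ord0 addn0. Qed.
Lemma PS_consS x y k : PS (x :: y) k.+1 = sumn x + PS y k.
Proof. by rewrite /PS big_ord_recl. Qed.
Lemma PA_cons0 c a L : PA ((c, a) :: L) 0 = a.
Proof. by rewrite /PA big_ord_recl big_ord0 addn0. Qed.
Lemma PA_consS c a L k : PA ((c, a) :: L) k.+1 = a + PA L k.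
Proof. by rewrite /PA big_ord_recl. Qed.

Lemma mem_flowsP t L b y :
  (y \in flows_list t L b) <->
  [/\ size y = size L,
      forall i, i < size L -> size (nth [::] y i) = (nth (0, 0) L i).1 &
      forall k, k < size L -> PS y k <= b + t * PA L k].
Proof.
elim: L b y => [|[c a] L IH] b y.
  rewrite /= inE; split; first by move/eqP ->.
  by case=> /size0nil ->.
case: y => [|x y].
  by rewrite nil_flows_cons; split => // -[].
rewrite mem_flows_cons; split.
  case/and3P => /eqP hx hs /IH [hy hi hk]; split => /=.
  - by rewrite hy.
  - by case => [|i] //= /hi.
  - case => [|k] hk'; first by rewrite PS_cons0 PA_cons0.
    have := hk k hk'; rewrite PS_consS PA_consS mulnDr.
    by move: hs; lia.
case=> /= [[hy] hi hk].
have hx : size x = c by apply: (hi 0).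
have hs : sumn x <= b + t * a.
  by have := hk 0 isT; rewrite PS_cons0 PA_cons0.
rewrite hx eqxx hs /=; apply/IH; split => //.
  by move=> i hi'; apply: (hi i.+1).
move=> k hk'; have := hk k.+1 hk'.
rewrite PS_consS PA_consS mulnDr.
by move: hs; lia.
Qed.

Lemma pref_equiv (g s al : nat -> nat) n :
  (forall k, k <= n -> g k + s k = (if k is k'.+1 then g k' else 0) + al k) <->
  (forall k, k <= n -> g k + \sum_(i < k.+1) s i = \sum_(i < k.+1) al i).
Proof.
split=> h.
  elim=> [|k IH] hk; first by rewrite !big_ord_recr !big_ord0 /= !add0n h.
  rewrite !(big_ord_recr k.+1) /=; have := h k.+1 hk; have := IH (ltnW hk).
  set u := \sum_(i < k.+1) _; set v := \sum_(i < k.+1) _; lia.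
case=> [|k] hk; first by have := h 0 hk; rewrite !big_ord_recr !big_ord0 /=.
have := h k.+1 hk; have := h k (ltnW hk); rewrite !(big_ord_recr k.+1) /=.
set u := \sum_(i < k.+1) _; set v := \sum_(i < k.+1) _; lia.
Qed.

Section Graph.
Variables (n : nat) (c : 'I_n.+1 -> nat) (a : 'I_n.+1 -> nat) (t : nat).

Definition cL : seq (nat * nat) := [seq (c i, a i) | i <- enum 'I_n.+1].

Lemma size_cL : size cL = n.+1.
Proof. by rewrite size_map size_enum_ord. Qed.

Lemma nth_cL (i : 'I_n.+1) : nth (0, 0) cL i = (c i, a i).
Proof. by rewrite (nth_map i) ?size_enum_ord // nth_ord_enum. Qed.

Definition yf (f : {ffun Pi_edge c -> nat}) : seq (seq nat) :=
  [seq [seq f (inr (Tagged (fun i => 'I_(c i)) j)) | j <- enum 'I_(c i)] | i <- enum 'I_n.+1].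

Definition tf (y : seq (seq nat)) : {ffun Pi_edge c -> nat} :=
  [ffun e : Pi_edge c => match e with
             | inl k => t * PA cL k - PS y k
             | inr e => nth 0 (nth [::] y (tag e)) (tagged e) end].

Lemma size_yf f : size (yf f) = n.+1.
Proof. by rewrite size_map size_enum_ord. Qed.

Lemma nth_yf f (i : 'I_n.+1) :
  nth [::] (yf f) i = [seq f (inr (Tagged (fun i => 'I_(c i)) j)) | j <- enum 'I_(c i)].
Proof. by rewrite (nth_map i) ?size_enum_ord // nth_ord_enum. Qed.

Lemma size_nth_yf f (i : 'I_n.+1) : size (nth [::] (yf f) i) = c i.
Proof. by rewrite nth_yf size_map size_enum_ord. Qed.

Lemma sumn_yf f (i : 'I_n.+1) :
  sumn (nth [::] (yf f) i) = \sum_(e : extra_edge c | tag e == i) f (inr e).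
Proof.
rewrite nth_yf sumnE big_map big_enum /=.
transitivity (\sum_(i0 | i0 == i) \sum_(j : 'I_(c i0)) f (inr (Tagged (fun i => 'I_(c i)) j))).
  by rewrite big_pred1_eq.
rewrite (sig_big_dep (fun i0 => i0 == i) (fun i0 (j : 'I_(c i0)) => true)
          (fun i0 (j : 'I_(c i0)) => f (inr (Tagged (fun i => 'I_(c i)) j)))).
apply: eq_big => [[i0 j]|[i0 j] _] //=; by rewrite andbT.
Qed.

Lemma yf_tf y : size y = n.+1 -> (forall i : 'I_n.+1, size (nth [::] y i) = c i) ->
  yf (tf y) = y.
Proof.
move=> hs hi; apply: (@eq_from_nth _ [::]); first by rewrite size_yf hs.
move=> i; rewrite size_yf => hin.
rewrite (nth_yf _ (Ordinal hin)) /=.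
have -> : [seq tf y (inr (Tagged (fun i => 'I_(c i)) j)) | j <- enum 'I_(c (Ordinal hin))]
        = [seq nth 0 (nth [::] y i) j | j <- iota 0 (c (Ordinal hin))].
  by rewrite -val_enum_ord -map_comp; apply: eq_map => j /=; rewrite ffunE.
by rewrite -(hi (Ordinal hin)) /= -/(mkseq _ _) mkseq_nth.
Qed.

Lemma path_sum (f : {ffun Pi_edge c -> nat}) (k : 'I_n.+1) :
  \sum_(e : 'I_n.+1 | e.+1 == k) f (inl e) = if (k : nat) is k'.+1 then f (inl (inord k')) else 0.
Proof.
case: k => [[|k'] hk] /=.
  by rewrite big_pred0.
rewrite (eq_bigl (pred1 (inord k'))) ?big_pred1_eq // => e.
rewrite /= eqSS; apply/eqP/eqP => [<-|->]; first by rewrite inord_val.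
by rewrite inordK //; lia.
Qed.

Lemma flowP f :
  is_int_flow (fun k => t * a k) f <->
  (forall k : 'I_n.+1, f (inl k) + PS (yf f) k = t * PA cL k).
Proof.
pose g k := f (inl (inord k)).
pose s k := sumn (nth [::] (yf f) k).
pose al k := t * (nth (0, 0) cL k).2.
have e1 : (forall k : 'I_n.+1, f (inl k) + PS (yf f) k = t * PA cL k) <->
   (forall k, k <= n -> g k + \sum_(i < k.+1) s i = \sum_(i < k.+1) al i).
  split=> h k.
    move=> hk; have := h (Ordinal (hk : k < n.+1)).
    rewrite /g /PS /PA big_distrr.
    have -> : inord k = Ordinal (hk : k < n.+1) by apply: val_inj; rewrite /= inordK.
    by [].
  by have := h k (ltn_ord k); rewrite /g /PS /PA big_distrr inord_val.
rewrite e1 -pref_equiv; split=> h k.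
  move=> hk; have := h (Ordinal (hk : k < n.+1)).
  rewrite -sumn_yf path_sum /= /g /s /al.
  have := nth_cL (Ordinal (hk : k < n.+1)); rewrite /= => ->.
  have -> : inord k = Ordinal (hk : k < n.+1) by apply: val_inj; rewrite /= inordK.
  by [].
have := h k (ltn_ord k).
by rewrite /g /s /al inord_val nth_cL -sumn_yf path_sum.
Qed.

Lemma shape_flows y : y \in flows_list t cL 0 ->
  size y = n.+1 /\ forall i : 'I_n.+1, size (nth [::] y i) = c i.
Proof.
case/mem_flowsP => hs hi _; rewrite size_cL in hs; split => // i.
by rewrite hi ?size_cL // nth_cL.
Qed.

Lemma K_Pi_W : K_Pi c (fun k => t * a k) (W t cL 0).
Proof.
exists (map tf (flows_list t cL 0)); split.
- rewrite map_inj_in_uniq ?uniq_flows // => y1 y2 h1 h2 e.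
  have [s1 i1] := shape_flows h1; have [s2 i2] := shape_flows h2.
  by rewrite -(yf_tf s1 i1) -(yf_tf s2 i2) e.
- move=> f; split.
  + case/mapP => y hy ->; have [sy iy] := shape_flows hy.
    apply/flowP => k; rewrite yf_tf // ffunE /=.
    case/mem_flowsP: hy => _ _ /(_ k); rewrite size_cL add0n => /(_ (ltn_ord k)).
    by move=> h; rewrite subnK.
  + move=> hf; have H := (flowP f).1 hf; apply/mapP; exists (yf f).
      apply/mem_flowsP; split.
      * by rewrite size_yf size_cL.
      * move=> i; rewrite size_cL => hi.
        by rewrite (size_nth_yf f (Ordinal hi)) (nth_cL (Ordinal hi)).
      * move=> k; rewrite size_cL => hk; have := H (Ordinal hk); rewrite /= add0n.
        set u := PS _ _; lia.
    apply/ffunP => -[k|e]; rewrite ffunE /=.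
      by have := H k; move=> <-; rewrite addnK.
    rewrite nth_yf (nth_map (tagged e)) ?size_enum_ord // nth_ord_enum.
    by case: e.
- by rewrite size_map.
Qed.

End Graph.

Lemma mc_fact x d : mc x d * d`! = \prod_(r < d) (x + r).
Proof.
elim: d => [|d IH]; first by rewrite mcx0 big_ord0.
by rewrite factS mulnCA mulnA mc_mul -mulnA IH big_ord_recr /= mulnC.
Qed.

Local Open Scope ring_scope.

Definition nn (p : {poly rat}) := forall i, 0 <= p`_i.

Lemma nn_mul p q : nn p -> nn q -> nn (p * q).
Proof.
move=> hp hq i; rewrite coefM; apply: sumr_ge0 => j _.
exact: mulr_ge0.
Qed.
Lemma nn_add p q : nn p -> nn q -> nn (p + q).
Proof. by move=> hp hq i; rewrite coefD addr_ge0. Qed.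
Lemma nn_sum (I : finType) (P : pred I) (F : I -> {poly rat}) :
  (forall i, P i -> nn (F i)) -> nn (\sum_(i | P i) F i).
Proof.
move=> h; apply: (big_ind nn) => //; last exact: nn_add.
by move=> i; rewrite coef0.
Qed.
Lemma nn_prod (I : finType) (P : pred I) (F : I -> {poly rat}) :
  (forall i, P i -> nn (F i)) -> nn (\prod_(i | P i) F i).
Proof.
move=> h; apply: (big_ind nn) => //; last exact: nn_mul.
by move=> i; rewrite coef1; case: (i == 0)%N.
Qed.
Lemma nn1 : nn 1. Proof. by move=> i; rewrite coef1; case: (i == 0)%N. Qed.

Lemma size_sum_le (I : finType) (P : pred I) (F : I -> {poly rat}) n :
  (forall i, P i -> (size (F i) <= n)%N) -> (size (\sum_(i | P i) F i)%R <= n)%N.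
Proof.
move=> h; apply: (big_ind (fun p : {poly rat} => (size p <= n)%N)) => //.
  by rewrite size_poly0.
move=> p q hp hq; apply: leq_trans (size_polyD _ _) _.
by rewrite geq_max hp hq.
Qed.

Definition lin (a w : nat) : {poly rat} := a%:R *: 'X + (w%:R)%:P.
Definition G (a u d : nat) : {poly rat} :=
  (d`!%:R)^-1 *: \prod_(r < d) lin a (u + r).

Lemma nn_lin a w : nn (lin a w).
Proof.
move=> i; rewrite /lin coefD coefZ coefX coefC.
by apply: addr_ge0; [apply: mulr_ge0 => //; case: (i == 1)%N | case: (i == 0)%N].
Qed.
Lemma size_lin a w : (size (lin a w) <= 2)%N.
Proof.
apply: leq_trans (size_polyD _ _) _; rewrite geq_max.
rewrite (leq_trans (size_scale_leq _ _)) ?size_polyX //.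
exact: leq_trans (size_polyC_leq1 _) _.
Qed.

Lemma nn_G a u d : nn (G a u d).
Proof.
move=> i; rewrite /G coefZ; apply: mulr_ge0; first by rewrite invr_ge0.
by apply: nn_prod => r _; apply: nn_lin.
Qed.

Lemma size_G a u d : (size (G a u d) <= d.+1)%N.
Proof.
apply: leq_trans (size_scale_leq _ _) _.
elim: d => [|d IH]; first by rewrite big_ord0 size_poly1.
rewrite big_ord_recr /=; apply: leq_trans (size_polyMleq _ _) _.
have := size_lin a (u + d); move: IH.
set m := size _; set k := size _; lia.
Qed.

Lemma G_eval a u d t : (G a u d).[t%:R] = (mc (t * a + u) d)%:R.
Proof.
rewrite /G hornerZ horner_prod.
have hf : (d`!)%:R != 0 :> rat by rewrite pnatr_eq0 -lt0n fact_gt0.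
apply: (mulfI hf); rewrite mulrA mulfV // mul1r -natrM mulnC mc_fact natr_prod.
apply: eq_bigr => r _; rewrite /lin hornerD hornerZ hornerX hornerC.
by rewrite -natrM -natrD mulnC addnA.
Qed.

Lemma pos_G a u d : (0 < a)%N -> (0 < u)%N -> forall i, (i < d.+1)%N -> 0 < (G a u d)`_i.
Proof.
move=> ha hu i hi; rewrite /G coefZ; apply: mulr_gt0; first by rewrite invr_gt0 ltr0n fact_gt0.
elim: d i hi => [|d IH] i hi.
  by rewrite big_ord0 coef1; case: i hi.
have nnP : nn (\prod_(r < d) lin a (u + r)) by apply: nn_prod => r _; apply: nn_lin.
rewrite big_ord_recr /= [X in _ * X]/lin mulrDr -scalerAr coefD coefZ coefMX coefMC.
case: (ltnP i d.+1) => hid.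
  apply: ltr_wpDl; last by apply: mulr_gt0; [exact: IH | rewrite ltr0n; lia].
  case: (i == 0)%N; first by rewrite mulr0.
  by apply: mulr_ge0.
have -> : i = d.+1 by lia.
apply: ltr_pwDl; last by apply: mulr_ge0.
by rewrite /=; apply: mulr_gt0; [rewrite ltr0n | exact: IH].
Qed.

Definition Rep (L : seq (nat * nat)) (Q : nat -> {poly rat}) (top : nat) :=
  [/\ Q top = 1, forall j, nn (Q j),
      forall j, (j <= top)%N -> (size (Q j) <= (top - j).+1)%N &
      forall t b, (W t L b)%:R = \sum_(j < top.+1) (Q j).[t%:R] * (mc j.+1 b)%:R].

Lemma Wcons_eval (L : seq (nat * nat)) (Q : nat -> {poly rat}) (top c a t b : nat) :
  (forall t b, (W t L b)%:R = \sum_(j < top.+1) (Q j).[t%:R] * (mc j.+1 b)%:R) ->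
  (W t ((c, a) :: L) b)%:R =
    \sum_(j < top.+1) (Q j).[t%:R] * (mc (b + t * a).+1 (c + j))%:R.
Proof.
move=> h; rewrite W_cons natr_sum.
under eq_bigr => s _ do rewrite natrM h mulr_sumr.
rewrite exchange_big /=; apply: eq_bigr => j _.
rewrite mc_sym -[(c + j).+1]addnS -(MV c j.+1) natr_sum mulr_sumr; apply: eq_bigr => s _.
by rewrite natrM mulrCA.
Qed.

Lemma G0 a u : G a u 0 = 1.
Proof. by rewrite /G big_ord0 fact0 invr1 scale1r. Qed.

Lemma Rep_cons L (Q : nat -> {poly rat}) (top c a : nat) : Rep L Q top ->
  Rep ((c, a) :: L)
      (fun i => \sum_(j < top.+1 | (i <= c + j)%N) Q j * G a 0 (c + j - i)) (top + c).
Proof.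
case=> Qtop Qnn Qsize Qeval; split.
- rewrite (eq_bigl (pred1 (@ord_max top))); last first.
    move=> j /=; apply/idP/eqP => [h|->]; last by rewrite /= addnC.
    by apply: val_inj => /=; have := ltn_ord j; lia.
  by rewrite big_pred1_eq /= Qtop mul1r addnC subnn G0.
- by move=> i; apply: nn_sum => j _; apply: nn_mul => //; apply: nn_G.
- move=> i hi; apply: size_sum_le => j hj.
  apply: leq_trans (size_polyMleq _ _) _.
  have := Qsize j (ltn_ord j); have := size_G a 0 (c + j - i).
  have := ltn_ord j; move: hj hi.
  set s1 := size (Q j); set s2 := size (G _ _ _); lia.
- move=> t b; rewrite (@Wcons_eval L Q top c a t _ Qeval).
  transitivity (\sum_(j < top.+1) \sum_(i < (top + c).+1)
     (if (i <= c + j)%N then (Q j).[t%:R] * (G a 0 (c + j - i)).[t%:R] * (mc i.+1 b)%:R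
      else 0)).
    apply: eq_bigr => j _; rewrite -big_mkcond /=.
    rewrite (eq_bigl (fun i : 'I_(top + c).+1 => (i < (c + j).+1)%N)) //.
    rewrite -(big_ord_widen _ (fun i => (Q j).[t%:R] * (G a 0 (c + j - i)).[t%:R] * (mc i.+1 b)%:R)); last first.
      by have := ltn_ord j; lia.
    rewrite -addSn -(MV b.+1 (t * a)) natr_sum mulr_sumr; apply: eq_bigr => i _.
    by rewrite G_eval addn0 mc_sym natrM -mulrA [X in _ * X = _]mulrC.
  rewrite exchange_big /=; apply: eq_bigr => i _.
  rewrite horner_sum mulr_suml [RHS]big_mkcond /=; apply: eq_bigr => j _.
  by case: ifP => // _; rewrite hornerM.
Qed.

Lemma Rep_ex L : exists Q top, Rep L Q top.
Proof.
elim: L => [|[c a] L [Q [top IH]]].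
  exists (fun _ => 1), 0%N; split => //.
  - exact: (fun _ => nn1).
  - by move=> j _; rewrite size_poly1.
  - by move=> t b; rewrite W_nil big_ord1 hornerC mul1r mc1.
by eexists; eexists; apply: Rep_cons IH.
Qed.

Lemma W_poly L : exists p : {poly rat},
  (forall t, p.[t%:R] = (W t L 0)%:R) /\ (forall i, (i < size p)%N -> 0 < p`_i).
Proof.
elim: L => [|[c a] L IH].
  exists 1; split; first by move=> t; rewrite W_nil hornerC.
  by move=> i; rewrite size_poly1; case: i => // _; rewrite coef1.
case: (posnP a) => [a0|apos].
  case: IH => p [hp hpos]; exists p; split => // t.
  by rewrite hp W_cons a0 muln0 big_ord1 /= mcx0 mul1n.
have [Q [top [Qtop Qnn Qsize Qeval]]] := Rep_ex L.
exists (\sum_(j < top.+1) Q j * G a 1 (c + j)); split.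
  move=> t; rewrite (@Wcons_eval L Q top c a t _ Qeval) horner_sum; apply: eq_bigr => j _.
  by rewrite hornerM G_eval add0n addn1.
have hsz : (size (\sum_(j < top.+1) Q j * G a 1 (c + j))%R <= (top + c).+1)%N.
  apply: size_sum_le => j _; apply: leq_trans (size_polyMleq _ _) _.
  have := Qsize j (ltn_ord j); have := size_G a 1 (c + j).
  have := ltn_ord j.
  set s1 := size (Q j); set s2 := size (G _ _ _); lia.
move=> i hi; have hi' := leq_trans hi hsz.
rewrite coef_sum (bigD1 ord_max) //= Qtop mul1r.
apply: ltr_pwDl; first by apply: pos_G => //; lia.
apply: sumr_ge0 => j _; apply: nn_mul => //; exact: nn_G.
Qed.

Unset Implicit Arguments.

Theorem corollary6p20 (n : nat) (c : 'I_(n.+1) -> nat) (a : 'I_(n.+1) -> nat) :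
  exists p : {poly rat},
    (forall t : nat, exists N : nat,
        K_Pi c (fun k => (t * a k)%N) N /\ p.[t%:R] = N%:R) /\
    (forall i : nat, (i < size p)%N -> 0 < p`_i).
Proof.
have [p [hp hpos]] := W_poly (cL c a).
exists p; split => // t; exists (W t (cL c a) 0); split; first exact: K_Pi_W.
exact: hp.
Qed.
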